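(* Let $P\subseteq\{\text{monotonic},\text{topped},\text{cufi}\}$ and let $\mathbf{L}_P$ be the least infinitary modal logic having all properties in $P$. Then for every formula $\varphi$ of the infinitary modal language: $\varphi\in\mathbf{L}_P$ if and only if $Z\models\varphi$ for every neighborhood frame $Z$ having all properties in $P$. In particular the least normal infinitary modal logic $\mathbf{K}_{\omega_1}$ (monotonic, topped and cufi) is sound and complete with respect to the class of monotonic, topped, cufi neighborhood frames.
   Context: Infinitary modal language: a countable set $\mathsf{Prop}$ of propositional variables, $\top,\bot$, $\neg$, $\Box$, and conjunction $\bigwedge\Gamma$ for every countable set $\Gamma$ of formulas. An infinitary modal logic is a set $\mathbf{L}$ of formulas containing all classical propositional tautologies, closed under substitution and modus ponens, such that: $\bigwedge\Gamma\supset\varphi\in\mathbf{L}$ for every countable $\Gamma$ and $\varphi\in\Gamma$; if $\psi\supset\varphi\in\mathbf{L}$ for all $\varphi\in\Gamma$ then $\psi\supset\bigwedge\Gamma\in\mathbf{L}$; and $\varphi\equiv\psi\in\mathbf{L}$ implies $\Box\varphi\equiv\Box\psi\in\mathbf{L}$. It is monotonic if it contains $\Box(p\land q)\supset\Box p\land\Box q$, topped if it contains $\Box\top$, cufi if it contains $\Box p\land\Box q\supset\Box(p\land q)$. A neighborhood frame is $\langle C,\mathcal{V}\rangle$ with $C\ne\emptyset$, $\mathcal{V}:C\to\mathcal{P}(\mathcal{P}(C))$; monotonic if each $\mathcal{V}(c)$ is upward closed under $\subseteq$, topped if $C\in\mathcal{V}(c)$ for all $c$, cufi if each $\mathcal{V}(c)$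 is closed under non-empty finite intersections. A valuation $v:\mathsf{Prop}\to\mathcal{P}(C)$ extends by $v(\top)=C$, $v(\bot)=\emptyset$, $v(\bigwedge\Gamma)=\bigcap_{\varphi\in\Gamma}v(\varphi)$, $v(\neg\varphi)=C\setminus v(\varphi)$, $c\in v(\Box\varphi)$ iff $v(\varphi)\in\mathcal{V}(c)$. $Z\models\varphi$ means $v(\varphi)=C$ for every valuation $v$ on $Z$. *)

(* Defs.v *)
From Stdlib Require Import List.
Import ListNotations.

(* A countable set Gamma of formulas is represented by an enumeration
   g : nat -> option form ; Gamma = { phi | exists n, g n = Some phi }.
   The option allows Gamma to be empty (or finite). *)
Inductive form : Type :=
| Var  : nat -> form
| Top  : form
| Bot  : form
| Neg  : form -> form
| Box  : form -> form
| Conj : (nat -> option form) -> form.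

Definition inC (g : nat -> option form) (phi : form) : Prop :=
  exists n, g n = Some phi.

Definition pair_seq (a b : form) : nat -> option form :=
  fun n => match n with 0 => Some a | _ => Some b end.
Definition And (a b : form) : form := Conj (pair_seq a b).
Definition Imp (a b : form) : form := Neg (And a (Neg b)).
Definition Iff (a b : form) : form := And (Imp a b) (Imp b a).

Fixpoint subst (s : nat -> form) (phi : form) : form :=
  match phi with
  | Var p => s p
  | Top => Top
  | Bot => Bot
  | Neg a => Neg (subst s a)
  | Box a => Box (subst s a)
  | Conj g => Conj (fun n => match g n with
                             | Some a => Some (subst s a)
                             | None => None end)
  end.

Fixpoint beval (av : nat -> Prop) (ab : form -> Prop) (phi : form) : Prop :=
  match phi with
  | Var p => av p
  | Top => True
  | Bot => False
  | Neg a => ~ beval av ab a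
  | Box a => ab a
  | Conj g => forall n, match g n with
                        | Some a => beval av ab a
                        | None => True end
  end.

Definition tautology (phi : form) : Prop :=
  forall av ab, beval av ab phi.

Definition is_logic (L : form -> Prop) : Prop :=
  (forall phi, tautology phi -> L phi) /\
  (forall s phi, L phi -> L (subst s phi)) /\
  (forall phi psi, L phi -> L (Imp phi psi) -> L psi) /\
  (forall g phi, inC g phi -> L (Imp (Conj g) phi)) /\
  (forall g psi, (forall phi, inC g phi -> L (Imp psi phi)) ->
                 L (Imp psi (Conj g))) /\
  (forall phi psi, L (Iff phi psi) -> L (Iff (Box phi) (Box psi))).

Inductive property : Type := Monotonic | Topped | Cufi.

Definition p0 := Var 0.
Definition p1 := Var 1.

Definition logic_has (L : form -> Prop) (x : property) : Prop :=
  match x with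
  | Monotonic => L (Imp (Box (And p0 p1)) (And (Box p0) (Box p1)))
  | Topped => L (Box Top)
  | Cufi => L (Imp (And (Box p0) (Box p1)) (Box (And p0 p1)))
  end.

Definition LP (P : property -> Prop) (phi : form) : Prop :=
  forall L, is_logic L -> (forall x, P x -> logic_has L x) -> L phi.

Record nframe : Type := NFrame {
  carrier :> Type;
  nonempty : inhabited carrier;
  nbhd : carrier -> (carrier -> Prop) -> Prop }.

Definition frame_has (Z : nframe) (x : property) : Prop :=
  match x with
  | Monotonic => forall c (X Y : Z -> Prop), nbhd Z c X ->
                   (forall y, X y -> Y y) -> nbhd Z c Y
  | Topped => forall c, nbhd Z c (fun _ => True)
  | Cufi => forall c (l : list (Z -> Prop)), l <> [] ->
              Forall (nbhd Z c) l ->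
              nbhd Z c (fun y => Forall (fun X => X y) l)
  end.

Fixpoint eval (Z : nframe) (v : nat -> Z -> Prop) (phi : form) : Z -> Prop :=
  match phi with
  | Var p => v p
  | Top => fun _ => True
  | Bot => fun _ => False
  | Neg a => fun c => ~ eval Z v a c
  | Box a => fun c => nbhd Z c (eval Z v a)
  | Conj g => fun c => forall n, match g n with
                                 | Some a => eval Z v a c
                                 | None => True end
  end.

Definition valid (Z : nframe) (phi : form) : Prop :=
  forall (v : nat -> Z -> Prop) (c : Z), eval Z v phi c.

(* Main.v *)
Require Import Defs.
From Stdlib Require Import List Classical ClassicalEpsilon FunctionalExtensionality PropExtensionality Cantor PeanoNat.
Import ListNotations.

Definition form_ind' (Pr : form -> Prop)
  (hV : forall p, Pr (Var p)) (hT : Pr Top) (hB : Pr Bot)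
  (hN : forall a, Pr a -> Pr (Neg a)) (hX : forall a, Pr a -> Pr (Box a))
  (hC : forall g, (forall n a, g n = Some a -> Pr a) -> Pr (Conj g)) :
  forall phi, Pr phi :=
  fix F phi := match phi with
  | Var p => hV p | Top => hT | Bot => hB
  | Neg a => hN a (F a) | Box a => hX a (F a)
  | Conj g => hC g (fun n => match g n as o return forall a, o = Some a -> Pr a with
                  | Some b => fun a e =>
                     match e in _ = o return (match o with Some a' => Pr a' | None => True end)
                     with eq_refl => F b end
                  | None => fun a e =>
                     match e in _ = o return (match o with Some a' => Pr a' | None => True end)
                     with eq_refl => I end
                  end)
  end.

Lemma beval_Neg av ab a : beval av ab (Neg a) <-> ~ beval av ab a.
Proof. reflexivity. Qed.
Lemma beval_Top av ab : beval av ab Top <-> True.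
Proof. reflexivity. Qed.
Lemma beval_Bot av ab : beval av ab Bot <-> False.
Proof. reflexivity. Qed.
Lemma beval_And av ab a b : beval av ab (And a b) <-> beval av ab a /\ beval av ab b.
Proof. simpl. split. intro H. exact (conj (H 0) (H 1)). intros [H1 H2] [|n]; auto. Qed.
Lemma beval_Imp av ab a b : beval av ab (Imp a b) <-> (beval av ab a -> beval av ab b).
Proof. unfold Imp. rewrite beval_Neg, beval_And, beval_Neg. split.
  intros H Ha. destruct (classic (beval av ab b)); tauto. tauto. Qed.
Lemma beval_Iff av ab a b : beval av ab (Iff a b) <-> (beval av ab a <-> beval av ab b).
Proof. unfold Iff. rewrite beval_And, !beval_Imp. tauto. Qed.

Ltac taut := let av := fresh "av" in let ab := fresh "ab" in intros av ab;
  repeat (rewrite ?beval_Iff, ?beval_Imp, ?beval_And, ?beval_Neg, ?beval_Top, ?beval_Bot);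
  apply NNPP; tauto.



Lemma L_taut L (HL : is_logic L) a : tautology a -> L a.
Proof. destruct HL as [H _]; auto. Qed.
Lemma L_mp L (HL : is_logic L) a b : L a -> L (Imp a b) -> L b.
Proof. destruct HL as (_&_&H&_); eauto. Qed.
Lemma L_mp1 L (HL : is_logic L) a b : L a -> tautology (Imp a b) -> L b.
Proof. intros. eapply L_mp; eauto. apply L_taut; auto. Qed.
Lemma L_mp2 L (HL : is_logic L) a b c : L a -> L b -> tautology (Imp a (Imp b c)) -> L c.
Proof. intros Ha Hb Ht. apply (L_mp L HL b c Hb). apply (L_mp L HL a _ Ha). apply L_taut; auto. Qed.
Lemma L_ce L (HL : is_logic L) g a : inC g a -> L (Imp (Conj g) a).
Proof. destruct HL as (_&_&_&H&_); eauto. Qed.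
Lemma L_ci L (HL : is_logic L) g psi : (forall phi, inC g phi -> L (Imp psi phi)) -> L (Imp psi (Conj g)).
Proof. destruct HL as (_&_&_&_&H&_); eauto. Qed.
Lemma L_box L (HL : is_logic L) a b : L (Iff a b) -> L (Iff (Box a) (Box b)).
Proof. destruct HL as (_&_&_&_&_&H); eauto. Qed.
Lemma L_subst L (HL : is_logic L) s a : L a -> L (subst s a).
Proof. destruct HL as (_&H&_); eauto. Qed.
Lemma L_trans L (HL : is_logic L) a b c : L (Imp a b) -> L (Imp b c) -> L (Imp a c).
Proof. intros H1 H2. apply (L_mp2 L HL _ _ _ H1 H2). taut. Qed.

Lemma subst_And s a b : subst s (And a b) = And (subst s a) (subst s b).
Proof. unfold And. simpl. f_equal. extensionality n. destruct n; reflexivity. Qed.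
Lemma subst_Imp s a b : subst s (Imp a b) = Imp (subst s a) (subst s b).
Proof. unfold Imp. change (Neg (subst s (And a (Neg b))) = Neg (And (subst s a) (Neg (subst s b)))).
  rewrite subst_And. reflexivity. Qed.
Lemma subst_Box s a : subst s (Box a) = Box (subst s a).
Proof. reflexivity. Qed.

Definition s2 (a b : form) : nat -> form := fun n => match n with 0 => a | 1 => b | _ => Var n end.

Lemma L_monoax L (HL : is_logic L) a b : logic_has L Monotonic ->
  L (Imp (Box (And a b)) (And (Box a) (Box b))).
Proof. simpl. intro H. apply (L_subst L HL (s2 a b)) in H.
  rewrite !subst_Imp, !subst_Box, !subst_And, !subst_Box in H. exact H. Qed.
Lemma L_cufiax L (HL : is_logic L) a b : logic_has L Cufi ->
  L (Imp (And (Box a) (Box b)) (Box (And a b))).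
Proof. simpl. intro H. apply (L_subst L HL (s2 a b)) in H.
  rewrite !subst_Imp, !subst_And, !subst_Box, !subst_And in H. exact H. Qed.

Definition cons (L : form -> Prop) (a : form) : Prop := ~ L (Neg a).

Lemma cons_split L (HL : is_logic L) d f : cons L d -> cons L (And d f) \/ cons L (And d (Neg f)).
Proof. unfold cons. intro Hd. destruct (classic (L (Neg (And d f)))) as [H1|H1]; [right|left; auto].
  intro H2. apply Hd. apply (L_mp2 L HL _ _ _ H1 H2). taut. Qed.

Definition step (L : form -> Prop) (d f : form) : form :=
  if excluded_middle_informative (cons L (And d f)) then And d f
  else match f with
       | Conj g => And (And d (Neg f)) (Neg (epsilon (inhabits Top)
            (fun a => inC g a /\ cons L (And (And d (Neg f)) (Neg a)))))
       | _ => And d (Neg f)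
       end.

Lemma conj_witness L (HL : is_logic L) d g : cons L (And d (Neg (Conj g))) ->
  exists a, inC g a /\ cons L (And (And d (Neg (Conj g))) (Neg a)).
Proof. intro Hd'. apply NNPP; intro Hn. apply Hd'.
  assert (Hall : forall a, inC g a -> L (Imp (And d (Neg (Conj g))) a)).
  { intros a Ha. apply NNPP; intro Hc. apply Hn. exists a. split; auto. }
  apply L_ci in Hall; auto. apply (L_mp1 L HL _ _ Hall). taut. Qed.

Lemma step_cons L (HL : is_logic L) d f : cons L d -> cons L (step L d f).
Proof. intro Hd. unfold step.
  destruct (excluded_middle_informative (cons L (And d f))) as [H|H]; [exact H|].
  assert (Hd' : cons L (And d (Neg f))) by (destruct (cons_split L HL d f Hd); tauto).
  destruct f; try exact Hd'.
  destruct (epsilon_spec (inhabits Top) (fun a => inC o a /\ cons L (And (And d (Neg (Conj o))) (Neg a))))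
    as [_ H2]; auto. apply conj_witness; auto. Qed.

Lemma step_imp L (HL : is_logic L) d f : L (Imp (step L d f) d).
Proof. apply L_taut; auto. unfold step.
  destruct (excluded_middle_informative (cons L (And d f))); [taut|destruct f; taut]. Qed.

Lemma step_dec L (HL : is_logic L) d f : L (Imp (step L d f) f) \/ L (Imp (step L d f) (Neg f)).
Proof. unfold step.
  destruct (excluded_middle_informative (cons L (And d f))); [left; apply L_taut; auto; taut|].
  right; apply L_taut; auto; destruct f; taut. Qed.

Lemma step_conj L (HL : is_logic L) d g : cons L d ->
  L (Imp (step L d (Conj g)) (Conj g)) \/ exists a, inC g a /\ L (Imp (step L d (Conj g)) (Neg a)).
Proof. intro Hd. unfold step.
  destruct (excluded_middle_informative (cons L (And d (Conj g)))) as [H|H]; [left; apply L_taut; auto; taut|].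
  right.
  assert (Hd' : cons L (And d (Neg (Conj g)))) by (destruct (cons_split L HL d (Conj g) Hd); tauto).
  destruct (epsilon_spec (inhabits Top) (fun a => inC g a /\ cons L (And (And d (Neg (Conj g))) (Neg a))))
    as [H1 _]. apply conj_witness; auto.
  eexists; split; [exact H1|]. apply L_taut; auto; taut. Qed.

Fixpoint D L d0 (e : nat -> form) k := match k with 0 => d0 | S k => step L (D L d0 e k) (e k) end.
Definition T L d0 e x := exists k, L (Imp (D L d0 e k) x).

Definition good (L : form -> Prop) (F : form -> Prop) (t : form -> Prop) : Prop :=
  (forall x, L x -> t x) /\ (forall a b, t a -> L (Imp a b) -> t b) /\
  (forall a b, t a -> t b -> t (And a b)) /\ ~ t Bot /\
  (forall a, F a -> t a \/ t (Neg a)) /\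
  (forall g, F (Conj g) -> (forall a, inC g a -> t a) -> t (Conj g)).

Lemma world_exists L (HL : is_logic L) (e : nat -> form) d0 : cons L d0 ->
  exists t, good L (fun x => exists k, e k = x) t /\ t d0.
Proof. intro H0.
  assert (Dc : forall k, cons L (D L d0 e k)).
  { induction k; simpl; auto. apply step_cons; auto. }
  assert (Dm : forall k j, L (Imp (D L d0 e (k + j)) (D L d0 e k))).
  { intros k j; induction j. rewrite Nat.add_0_r. apply L_taut; auto; taut.
    rewrite Nat.add_succ_r. simpl. eapply L_trans; eauto. apply step_imp; auto. }
  assert (Tmp : forall a b, T L d0 e a -> L (Imp a b) -> T L d0 e b).
  { intros a b [k Hk] H. exists k. eapply L_trans; eauto. }
  assert (Tbot : ~ T L d0 e Bot).
  { intros [k Hk]. apply (Dc k). apply (L_mp1 L HL _ _ Hk). taut. }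
  assert (Tand : forall a b, T L d0 e a -> T L d0 e b -> T L d0 e (And a b)).
  { intros a b [ka Ha] [kb Hb]. exists (ka + kb).
    assert (H1 := L_trans L HL _ _ _ (Dm ka kb) Ha).
    assert (H2 := L_trans L HL _ _ _ (Dm kb ka) Hb). rewrite Nat.add_comm in H2.
    apply (L_mp2 L HL _ _ _ H1 H2). taut. }
  exists (T L d0 e). split; [|exists 0; apply L_taut; auto; simpl; taut].
  split; [|split; [|split; [|split; [|split]]]]; auto.
  - intros x Hx. exists 0. apply (L_mp1 L HL _ _ Hx). taut.
  - intros a [k <-]. destruct (step_dec L HL (D L d0 e k) (e k)); [left|right]; exists (S k); auto.
  - intros g [k Hk] Hall. destruct (step_conj L HL (D L d0 e k) g (Dc k)) as [H|[a [Ha H]]].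
    + exists (S k). simpl. rewrite Hk. auto.
    + exfalso. apply Tbot. apply (Tmp (And a (Neg a))); [|apply L_taut; auto; taut].
      apply Tand; auto. exists (S k). simpl. rewrite Hk. auto.
Qed.


Lemma good_neg L (HL : is_logic L) F t a : good L F t -> t a -> t (Neg a) -> False.
Proof. intros (H0&H1&H2&H3&_) Ha Hn. apply H3. apply (H1 (And a (Neg a))); auto. apply L_taut; auto; taut. Qed.
Lemma good_and L (HL : is_logic L) F t a b : good L F t -> (t (And a b) <-> t a /\ t b).
Proof. intros (H0&H1&H2&H3&_). split.
  intro H; split; (eapply H1; [exact H|]); apply L_taut; auto; taut.
  intros [Ha Hb]; auto. Qed.

Lemma existence L (HL : is_logic L) (e : nat -> form) a b : ~ L (Imp a b) ->
  exists t, good L (fun x => exists k, e k = x) t /\ t a /\ ~ t b.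
Proof. intro H. destruct (world_exists L HL e (And a (Neg b)) H) as [t [Hg Ht]].
  exists t. split; auto. apply (good_and L HL _ _ _ _ Hg) in Ht. destruct Ht as [Ha Hb].
  split; auto. intro. eapply good_neg; eauto. Qed.

Fixpoint sub (phi : form) (f n : nat) {struct f} : form :=
  match f with 0 => phi | S f' =>
    let (i, n') := of_nat n in
    match phi with
    | Neg a => sub a f' n'
    | Box a => sub a f' n'
    | Conj g => match g i with Some a => sub a f' n' | None => phi end
    | _ => phi end end.
Definition enum phi k := let (f, n) := of_nat k in sub phi f n.

Definition child (a x : form) : Prop :=
  x = Neg a \/ x = Box a \/ exists g, x = Conj g /\ inC g a.

Lemma sub_child0 phi a : child a phi -> exists f n, sub phi f n = a.
Proof. intros [->|[->|[g [-> [m Hm]]]]].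
  - exists 1, (to_nat (0,0)). cbn [sub]; rewrite ?cancel_of_to. reflexivity.
  - exists 1, (to_nat (0,0)). cbn [sub]; rewrite ?cancel_of_to. reflexivity.
  - exists 1, (to_nat (m,0)). cbn [sub]; rewrite ?cancel_of_to, Hm. reflexivity. Qed.

Lemma sub_child f : forall phi n a, child a (sub phi f n) -> exists f' n', sub phi f' n' = a.
Proof. induction f; intros phi n a Hc.
  - apply sub_child0; auto.
  - simpl in Hc. destruct (of_nat n) as [i n'] eqn:E.
    destruct phi as [p| | |b|b|g]; try (apply sub_child0; auto; fail).
    + destruct (IHf b n' a Hc) as [f1 [n1 H1]]. exists (S f1), (to_nat (0, n1)). cbn [sub]; rewrite ?cancel_of_to. auto.
    + destruct (IHf b n' a Hc) as [f1 [n1 H1]]. exists (S f1), (to_nat (0, n1)). cbn [sub]; rewrite ?cancel_of_to. auto.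
    + destruct (g i) as [b|] eqn:Eg; [|apply sub_child0; auto].
      destruct (IHf b n' a Hc) as [f1 [n1 H1]]. exists (S f1), (to_nat (i, n1)). cbn [sub]; rewrite ?cancel_of_to, Eg. auto.
Qed.

Lemma enum_child phi a x : (exists k, enum phi k = x) -> child a x -> exists k, enum phi k = a.
Proof. intros [k Hk] Hc. unfold enum in Hk. destruct (of_nat k) as [f n]. subst x.
  destruct (sub_child f phi n a Hc) as [f' [n' H]]. exists (to_nat (f', n')). unfold enum.
  rewrite cancel_of_to. auto. Qed.

Lemma enum_phi phi : exists k, enum phi k = phi.
Proof. exists (to_nat (0,0)). unfold enum. rewrite cancel_of_to. reflexivity. Qed.

Definition W L (e : nat -> form) := {t : form -> Prop | good L (fun x => exists k, e k = x) t}.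
Definition cnb (P : property -> Prop) L e (w : W L e) (X : W L e -> Prop) : Prop :=
  exists a, proj1_sig w (Box a) /\ (forall u : W L e, proj1_sig u a -> X u) /\
    (~ P Monotonic -> forall u : W L e, X u -> proj1_sig u a).
Definition canon P L e (i : inhabited (W L e)) : nframe := NFrame (W L e) i (cnb P L e).
Definition cval L e : nat -> W L e -> Prop := fun p u => proj1_sig u (Var p).

Lemma truth P L (HL : is_logic L) phi (i : inhabited (W L (enum phi)))
  (HPm : P Monotonic -> logic_has L Monotonic) :
  forall a, (exists k, enum phi k = a) ->
  forall u : W L (enum phi), eval (canon P L (enum phi) i) (cval L (enum phi)) a u <-> proj1_sig u a.
Proof.
  induction a as [p| | |a IH|a IH|g IH] using form_ind'; intros Ha u;
    destruct u as [t Hg]; pose proof Hg as Hg'; destruct Hg' as (H0&H1&H2&H3&H4&H5); simpl.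
  - reflexivity.
  - split; auto. intros _. apply H0. apply L_taut; auto. intros av ab. exact I.
  - tauto.
  - assert (Ha' := enum_child phi a _ Ha (or_introl eq_refl)).
    rewrite (IH Ha' (exist _ t Hg)). simpl. split.
    + intro Hn. destruct (H4 _ Ha'); tauto.
    + intros Hn Hta. eapply good_neg; eauto.
  - assert (Ha' := enum_child phi a _ Ha (or_intror (or_introl eq_refl))).
    split.
    + intros [b [Hb [Hba Hab]]]. simpl in Hb.
      assert (Iba : L (Imp b a)).
      { apply NNPP; intro Hn. destruct (existence L HL (enum phi) b a Hn) as [t' [Hg1 [Hb1 Ha1]]].
        apply Ha1. apply (IH Ha' (exist _ t' Hg1)). apply (Hba (exist _ t' Hg1)). exact Hb1. }
      destruct (classic (P Monotonic)) as [Hm|Hm].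
      * apply HPm in Hm.
        assert (E1 : L (Iff b (And b a))) by (apply (L_mp1 L HL _ _ Iba); taut).
        apply (L_box L HL) in E1. assert (M := L_monoax L HL b a Hm).
        apply (H1 (Box b)); auto. apply (L_mp2 L HL _ _ _ E1 M). taut.
      * assert (Iab : L (Imp a b)).
        { apply NNPP; intro Hn. destruct (existence L HL (enum phi) a b Hn) as [t' [Hg1 [Hb1 Ha1]]].
          apply Ha1. apply (Hab Hm (exist _ t' Hg1)). apply (IH Ha' (exist _ t' Hg1)). exact Hb1. }
        assert (E1 : L (Iff b a)) by (apply (L_mp2 L HL _ _ _ Iba Iab); taut).
        apply (L_box L HL) in E1.
        apply (H1 (Box b)); auto. apply (L_mp1 L HL _ _ E1). taut.
    + intro Hb. exists a. split; [exact Hb|]. split.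
      * intros u Hu. apply IH; auto.
      * intros _ u Hu. apply IH; auto.
  - assert (Hc : forall n b, g n = Some b -> exists k, enum phi k = b).
    { intros n b E. apply (enum_child phi b _ Ha). right; right. exists g. split; auto. exists n; auto. }
    split.
    + intro H. apply H5; auto. intros b [n E]. specialize (H n). rewrite E in H.
      apply (IH n b E (Hc n b E) (exist _ t Hg)). exact H.
    + intros H n. destruct (g n) as [b|] eqn:E; auto.
      apply (IH n b E (Hc n b E) (exist _ t Hg)). simpl. apply (H1 (Conj g)); auto.
      apply L_ce; auto. exists n; auto.
Qed.

Lemma canon_has P L (HL : is_logic L) e i (HP : forall x, P x -> logic_has L x) :
  forall x, P x -> frame_has (canon P L e i) x.
Proof. intros x Px. destruct x; simpl.
  - intros c X Y [a [Ha [H1 H2]]] HXY. exists a. split; auto. split; auto.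
    intro Hn. contradiction.
  - intro c. exists Top. change (W L e) in c. destruct c as [t Hg]. pose proof Hg as (H0&_). simpl. split.
    + apply H0. exact (HP Topped Px).
    + split; auto. intros _ [u Hu] _; simpl. destruct Hu as (H0'&_). apply H0'.
      apply L_taut; auto. intros av ab; exact I.
  - intros c l. induction l as [|X l IH]; intros Hne Hall; [contradiction|].
    inversion Hall as [|? ? HX Hl]; subst.
    destruct l as [|Y l'].
    + destruct HX as [a [Ha [H1 H2]]]. exists a. split; auto. split.
      * intros u Hu. constructor; auto.
      * intros Hm u Hu. inversion Hu; auto.
    + destruct (IH ltac:(discriminate) Hl) as [b [Hb [Hb1 Hb2]]].
      destruct HX as [a [Ha [H1 H2]]].
      change (W L e) in c. destruct c as [t Hg]. simpl in *.
      exists (And a b). split.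
      * pose proof Hg as (H0&Hi&Ha2&_). apply (Hi (And (Box a) (Box b))); auto.
        apply L_cufiax; auto.
      * split.
        -- intros u Hab; change (W L e) in u; destruct u as [u Hu]. simpl in Hab. apply (good_and L HL _ _ _ _ Hu) in Hab.
           destruct Hab. constructor; auto.
        -- intros Hm u Hf; change (W L e) in u; destruct u as [u Hu]. simpl. apply (good_and L HL _ _ _ _ Hu).
           inversion Hf as [|? ? HfX Hfl]; subst. split; [apply (H2 Hm (exist _ u Hu)); exact HfX | apply (Hb2 Hm (exist _ u Hu)); exact Hfl].
Qed.

Lemma eval_beval (Z : nframe) v c phi :
  eval Z v phi c <-> beval (fun p => v p c) (fun a => nbhd Z c (eval Z v a)) phi.
Proof. revert c. induction phi as [p| | |a IH|a IH|g IH] using form_ind'; intro c; simpl; try tauto.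
  - rewrite IH. tauto.
  - split; intros H n; specialize (H n); destruct (g n) eqn:E; auto; apply (IH n f E); auto.
Qed.

Lemma eval_And Z v a b c : eval Z v (And a b) c <-> eval Z v a c /\ eval Z v b c.
Proof. simpl. split. intro H. exact (conj (H 0) (H 1)). intros [H1 H2] [|n]; auto. Qed.
Lemma eval_Imp Z v a b c : eval Z v (Imp a b) c <-> (eval Z v a c -> eval Z v b c).
Proof. unfold Imp. change (~ eval Z v (And a (Neg b)) c <-> (eval Z v a c -> eval Z v b c)). rewrite eval_And. simpl. split.
  intros H Ha. destruct (classic (eval Z v b c)); tauto. tauto. Qed.
Lemma eval_Iff Z v a b c : eval Z v (Iff a b) c <-> (eval Z v a c <-> eval Z v b c).
Proof. unfold Iff. rewrite eval_And, !eval_Imp. tauto. Qed.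

Lemma eval_subst Z v s phi : forall c,
  eval Z v (subst s phi) c <-> eval Z (fun p => eval Z v (s p)) phi c.
Proof. induction phi as [p| | |a IH|a IH|g IH] using form_ind'; intro c; simpl; try tauto.
  - rewrite IH. tauto.
  - assert (E : eval Z v (subst s a) = eval Z (fun p => eval Z v (s p)) a).
    { extensionality c'. apply propositional_extensionality. apply IH. }
    rewrite E. tauto.
  - split; intros H n; specialize (H n); destruct (g n) eqn:E; auto; apply (IH n f E); auto.
Qed.

Definition VP (P : property -> Prop) phi :=
  forall Z : nframe, (forall x, P x -> frame_has Z x) -> valid Z phi.

Lemma VP_logic P : is_logic (VP P).
Proof. split; [|split; [|split; [|split; [|split]]]].
  - intros phi Ht Z _ v c. apply eval_beval. apply Ht.
  - intros s phi H Z HZ v c. apply eval_subst. apply H; auto.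
  - intros phi psi H1 H2 Z HZ v c. apply (eval_Imp Z v phi psi c); [apply H2|apply H1]; auto.
  - intros g phi [n E] Z HZ v c. apply eval_Imp. intro H. specialize (H n). rewrite E in H. exact H.
  - intros g psi H Z HZ v c. apply eval_Imp. intros Hp n. destruct (g n) as [a|] eqn:E; auto.
    apply (eval_Imp Z v psi a c); auto. apply H; auto. exists n; auto.
  - intros a b H Z HZ v c. apply eval_Iff.
    assert (E : eval Z v a = eval Z v b).
    { extensionality c'. apply propositional_extensionality. apply eval_Iff. apply H; auto. }
    simpl. rewrite E. tauto.
Qed.

Lemma VP_has P x : P x -> logic_has (VP P) x.
Proof. intro Px. destruct x; simpl; intros Z HZ v c; pose proof (HZ _ Px) as HF; simpl in HF.
  - apply eval_Imp. intro H. apply eval_And. simpl in H |- *. split.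
    + apply (HF c _ _ H). intros y Hy. apply eval_And in Hy. apply Hy.
    + apply (HF c _ _ H). intros y Hy. apply eval_And in Hy. apply Hy.
  - apply HF.
  - apply eval_Imp. intro H. apply eval_And in H. destruct H as [H1 H2]. simpl in H1, H2 |- *.
    assert (E : eval Z v (And p0 p1) = (fun y => Forall (fun X => X y) [v 0; v 1])).
    { extensionality y. apply propositional_extensionality. rewrite eval_And. simpl. split.
      - intros [A B]. repeat constructor; auto.
      - intro Hf. inversion Hf as [|? ? A Hf']; subst. inversion Hf'; subst. auto. }
    change (nbhd Z c (eval Z v (And p0 p1))). rewrite E. apply HF. discriminate. repeat constructor; auto.
Qed.

Lemma LP_logic P : is_logic (LP P).
Proof. split; [|split; [|split; [|split; [|split]]]]; unfold LP.
  - intros phi Ht L HL _. apply L_taut; auto.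
  - intros s phi H L HL HP. apply L_subst; auto. apply H; auto.
  - intros phi psi H1 H2 L HL HP. apply (L_mp L HL phi psi); [apply H1|apply H2]; auto.
  - intros g phi Hg L HL _. apply L_ce; auto.
  - intros g psi H L HL HP. apply L_ci; auto. intros phi Hp. apply H; auto.
  - intros a b H L HL HP. apply L_box; auto. apply H; auto.
Qed.

Lemma LP_has P x : P x -> logic_has (LP P) x.
Proof. intro Px. destruct x; simpl; intros L HL HP; exact (HP _ Px). Qed.

Theorem mainTheorem12 (P : property -> Prop) (phi : form) :
  LP P phi <->
  (forall Z : nframe, (forall x, P x -> frame_has Z x) -> valid Z phi).
Proof. split.
  - intro H. apply (H (VP P)). apply VP_logic. apply VP_has.
  - intro Hv. apply NNPP; intro Hn.
    assert (HL := LP_logic P).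
    assert (Hc : cons (LP P) (Neg phi)).
    { intro H. apply Hn. apply (L_mp1 _ HL _ _ H). taut. }
    destruct (world_exists (LP P) HL (enum phi) (Neg phi) Hc) as [t [Hg Ht]].
    set (w := exist _ t Hg : W (LP P) (enum phi)).
    set (Z := canon P (LP P) (enum phi) (inhabits w)).
    assert (HZ : forall x, P x -> frame_has Z x) by (apply canon_has; auto; apply LP_has).
    assert (E := Hv Z HZ (cval (LP P) (enum phi)) w).
    apply (truth P (LP P) HL phi (inhabits w) (LP_has P Monotonic) phi (enum_phi phi) w) in E.
    simpl in E. eapply good_neg; eauto.
Qed.
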